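(* Let $n\ge 2$, let $\Gamma\in\mathcal{M}_n(\mathbb{R})$ be symmetric with entries in $[0,1]$, zero diagonal, and at least one strictly positive off-diagonal entry in each row, such that the weighted graph with weight matrix $\Gamma$ is connected. Let $\boldsymbol{\eta}=\Gamma\mathbf{1}_n$, $L=\operatorname{diag}(\boldsymbol{\eta})-\Gamma$, let $\lambda,\mu>0$, $A=\lambda\mathsf{I}_n+\mu L$, and let $\mathsf{P}_a\coloneqq\operatorname{diag}(A)=\lambda\mathsf{I}_n+\mu\operatorname{diag}(\boldsymbol{\eta})$. Then every eigenvalue $\theta$ of $\mathsf{P}_a^{-1}A$ satisfies \[ \frac{\lambda}{\lambda+\mu\max\boldsymbol{\eta}}\le\theta\le\min\Big\{2,\ \frac{n}{n-1}\,\frac{\rho(L)}{a(L)}\Big\}. \]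
   Context: $\mathbf{1}_n$ is the all-ones vector, $\mathsf{I}_n$ the identity. $\rho(L)$ is the spectral radius (largest eigenvalue) of $L$, and $a(L)$ is the algebraic connectivity of $L$, i.e. its second smallest eigenvalue counted with multiplicity (positive since the graph is connected). *)

(* Defs.v *)
From HB Require Import structures.
From mathcomp Require Import all_boot all_order all_algebra.
Set Implicit Arguments. Unset Strict Implicit. Unset Printing Implicit Defensive.
Import Order.TTheory GRing.Theory Num.Theory.
Local Open Scope ring_scope.

Definition wconnected (R : numDomainType) (n : nat) (G : 'M[R]_n) : Prop :=
  forall i j : 'I_n, connect (fun x y : 'I_n => 0 < G x y) i j.

Definition degvec (R : nzRingType) (n : nat) (G : 'M[R]_n) : 'cV[R]_n :=
  G *m const_mx 1.

Definition laplacian (R : nzRingType) (n : nat) (G : 'M[R]_n) : 'M[R]_n :=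
  diag_mx (degvec G)^T - G.

Definition is_sorted_spectrum (R : numDomainType) (n : nat) (M : 'M[R]_n)
    (s : seq R) : Prop :=
  sorted <=%R s /\ char_poly M = \prod_(x <- s) ('X - x%:P).

(* Main.v *)
Require Import Defs.
From HB Require Import structures.
From mathcomp Require Import all_boot all_order all_algebra.
From mathcomp Require Import complex.
From mathcomp Require Import ring lra.
Import Order.TTheory GRing.Theory Num.Theory.
Local Open Scope ring_scope.
Set Implicit Arguments. Unset Strict Implicit. Unset Printing Implicit Defensive.

Notation ReR := complex.Re.
Notation ImR := complex.Im.

Section Common.
Variable R : rcfType.
Variable n : nat.
Implicit Types (M : 'M[R]_n) (w : 'rV[R]_n).

Definition qf M w : R := (w *m M *m w^T) 0 0.

Lemma qfE M w : qf M w = \sum_i \sum_j w 0 i * M i j * w 0 j.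
Proof.
rewrite /qf mxE exchange_big /=; apply: eq_bigr => i _; rewrite mxE /=.
rewrite mulr_suml; apply: eq_bigr => j _; by rewrite mxE.
Qed.
End Common.

Section Lap.
Variable R : rcfType.
Variable n : nat.
Variable G : 'M[R]_n.
Hypothesis Gsym : G^T = G.

Lemma Gs i j : G j i = G i j.
Proof. by rewrite -{1}Gsym mxE. Qed.

Definition eta i := \sum_j G i j.

Lemma degvecE i : degvec G i 0 = eta i.
Proof. by rewrite /degvec mxE; apply: eq_bigr => j _; rewrite mxE mulr1. Qed.

Lemma lapE i j : laplacian G i j = (i == j)%:R * eta i - G i j.
Proof. by rewrite /laplacian !mxE -(degvecE i) mxE mulrC mulr_natr. Qed.

Section W.
Variable w : 'rV[R]_n.
Let S1 := \sum_i \sum_j G i j * w 0 i ^+ 2.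
Let S2 := \sum_i \sum_j G i j * w 0 j ^+ 2.
Let X := \sum_i \sum_j w 0 i * G i j * w 0 j.

Lemma S12 : S1 = S2.
Proof. by rewrite /S1 /S2 exchange_big; apply: eq_bigr => i _; apply: eq_bigr => j _; rewrite Gs. Qed.

Lemma qfL_SX : qf (laplacian G) w = S1 - X.
Proof.
rewrite qfE /S1 /X -sumrB; apply: eq_bigr => i _.
under eq_bigr => j _ do rewrite lapE mulrBr mulrBl.
rewrite sumrB; congr (_ - _).
rewrite (bigD1 i) //= big1; last first.
  by move=> j /negbTE ji; rewrite eq_sym ji mul0r mulr0 mul0r.
rewrite eqxx mul1r addr0 -mulr_suml -/(eta i); ring.
Qed.

Lemma sum_eta_w : \sum_i eta i * w 0 i ^+ 2 = S1.
Proof. by rewrite /S1; apply: eq_bigr => i _; rewrite /eta mulr_suml. Qed.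

Lemma sum_sqrB : \sum_i \sum_j G i j * (w 0 i - w 0 j) ^+ 2 = S1 + S2 - X *+ 2.
Proof.
rewrite /S1 /S2 /X -big_split /= -sumrMnl -sumrB; apply: eq_bigr => i _.
rewrite -big_split /= -sumrMnl -sumrB; apply: eq_bigr => j _; ring.
Qed.

Lemma sum_sqrD : \sum_i \sum_j G i j * (w 0 i + w 0 j) ^+ 2 = S1 + S2 + X *+ 2.
Proof.
rewrite /S1 /S2 /X -big_split /= -sumrMnl -big_split; apply: eq_bigr => i _.
rewrite -big_split /= -sumrMnl -big_split; apply: eq_bigr => j _ /=; ring.
Qed.

Lemma qfL2 : qf (laplacian G) w * 2 = \sum_i \sum_j G i j * (w 0 i - w 0 j) ^+ 2.
Proof. rewrite sum_sqrB qfL_SX -S12; ring. Qed.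

Hypothesis Gge0 : forall i j, 0 <= G i j.

Lemma qfL_ge0 : 0 <= qf (laplacian G) w.
Proof.
have : 0 <= \sum_i \sum_j G i j * (w 0 i - w 0 j) ^+ 2.
  by apply: sumr_ge0 => i _; apply: sumr_ge0 => j _; rewrite mulr_ge0 ?sqr_ge0.
rewrite sum_sqrB qfL_SX -S12; lra.
Qed.

Lemma qfL_le2 : qf (laplacian G) w <= 2 * \sum_i eta i * w 0 i ^+ 2.
Proof.
have : 0 <= \sum_i \sum_j G i j * (w 0 i + w 0 j) ^+ 2.
  by apply: sumr_ge0 => i _; apply: sumr_ge0 => j _; rewrite mulr_ge0 ?sqr_ge0.
rewrite sum_sqrD qfL_SX sum_eta_w -S12; lra.
Qed.

Lemma qfL_eq0 : qf (laplacian G) w = 0 -> forall i j, 0 < G i j -> w 0 i = w 0 j.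
Proof.
move=> q0 i j Gij.
have : \sum_i \sum_j G i j * (w 0 i - w 0 j) ^+ 2 = 0.
  rewrite sum_sqrB -S12; move: q0; rewrite qfL_SX; lra.
move/psumr_eq0P => /(_ (fun i _ => sumr_ge0 _ (fun j _ => mulr_ge0 (Gge0 i j) (sqr_ge0 _)))).
move=> /(_ i isT) /psumr_eq0P.
move=> /(_ (fun j _ => mulr_ge0 (Gge0 i j) (sqr_ge0 _))) /(_ j isT) /eqP.
rewrite mulf_eq0 (gt_eqF Gij) /= sqrf_eq0 subr_eq0 => /eqP //.
Qed.

Hypothesis conn : wconnected G.

Lemma qfL_eq0_const : qf (laplacian G) w = 0 -> forall i j, w 0 i = w 0 j.
Proof.
move=> q0 i j; have /connectP [p pth ->] := conn i j.
elim: p i pth => //= k p IH i /andP [Gik pth].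
by rewrite (qfL_eq0 q0 Gik) IH.
Qed.
End W.

Definition dlt (i : 'I_n) : 'rV[R]_n := \row_j (j == i)%:R.

Lemma qfL_row (i : 'I_n) (p q : R) :
  qf (laplacian G) (\row_j (p + q * (j == i)%:R)) = q ^+ 2 * qf (laplacian G) (dlt i).
Proof.
apply: (@mulIf _ 2); first by rewrite pnatr_eq0.
rewrite -mulrA !qfL2 mulr_sumr; apply: eq_bigr => a _.
rewrite mulr_sumr; apply: eq_bigr => b _; rewrite !mxE; ring.
Qed.

Hypothesis Gdiag : forall i, G i i = 0.

Lemma qfL_dlt i : qf (laplacian G) (dlt i) = eta i.
Proof.
rewrite qfE (bigD1 i) //= [X in _ + X]big1 => [|a ai]; last first.
  by rewrite big1 // => b _; rewrite !mxE (negbTE ai) !mul0r.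
rewrite addr0 (bigD1 i) //= [X in _ + X]big1 => [|b bi]; last first.
  by rewrite !mxE (negbTE bi) mulr0.
rewrite addr0 [X in X * _ * _]mxE eqxx [X in _ * X]mxE eqxx lapE eqxx Gdiag subr0 !mul1r mulr1 //.
Qed.

Lemma sum_row_sq (i : 'I_n) (p q : R) :
  \sum_j (\row_j (p + q * (j == i)%:R)) 0 j ^+ 2 = n%:R * p ^+ 2 + 2 * p * q + q ^+ 2.
Proof.
have -> : \sum_j (\row_j (p + q * (j == i)%:R)) 0 j ^+ 2 =
   \sum_(j < n) (p ^+ 2 + (2 * p * q + q ^+ 2) * (j == i)%:R).
  apply: eq_bigr => j _; rewrite mxE; case: (j == i); rewrite ?mulr1 ?mulr0; ring.
rewrite big_split /= sumr_const card_ord -mulr_sumr (bigD1 i) //= big1 => [|j ji].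
  by rewrite eqxx addr0 mulr1 !addrA [n%:R * _]mulr_natl.
by rewrite (negbTE ji).
Qed.

End Lap.

Section Cx.
Variable R : rcfType.
Variable n : nat.
Local Notation C := (R[i]).
Local Notation toC := (real_complex R).
Local Open Scope sesquilinear_scope.

Lemma ReRD (x y : C) : ReR (x + y) = ReR x + ReR y. Proof. by case: x; case: y. Qed.
Lemma ReR0 : ReR (0 : C) = 0. Proof. by []. Qed.

Lemma ReR_sum (I : Type) (r : seq I) (P : pred I) (F : I -> C) :
  ReR (\sum_(i <- r | P i) F i) = \sum_(i <- r | P i) ReR (F i).
Proof. exact: (big_morph _ ReRD ReR0). Qed.

Definition Nc (z : C) : R := ReR z ^+ 2 + ImR z ^+ 2.

Lemma Nc_ge0 z : 0 <= Nc z.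
Proof. by rewrite /Nc addr_ge0 ?sqr_ge0. Qed.

Lemma mulJ (z : C) : z * z^* = toC (Nc z).
Proof. case: z => a b; rewrite /Nc; apply/eqP; rewrite eq_complex /=; apply/andP; split; apply/eqP; ring. Qed.

Lemma cqfE (M : 'M[C]_n) (u : 'rV[C]_n) :
  (u *m M *m u^t*) 0 0 = \sum_i \sum_j u 0 i * M i j * (u 0 j)^*.
Proof.
rewrite mxE exchange_big /=; apply: eq_bigr => i _; rewrite mxE /=.
rewrite mulr_suml; apply: eq_bigr => j _; by rewrite !mxE.
Qed.


Lemma ReR_term (x y : C) (m : R) :
  ReR (x * toC m * y^*) = m * (ReR x * ReR y + ImR x * ImR y).
Proof. case: x => a b; case: y => c d /=; ring. Qed.

Lemma ReQ (M : 'M[R]_n) (u : 'rV[C]_n) :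
  ReR ((u *m map_mx toC M *m u^t*) 0 0) =
  qf M (map_mx (@complex.Re R) u) + qf M (map_mx (@complex.Im R) u).
Proof.
rewrite cqfE !qfE ReR_sum -big_split; apply: eq_bigr => i _ /=.
rewrite ReR_sum -big_split; apply: eq_bigr => j _ /=.
rewrite !mxE ReR_term; ring.
Qed.

Lemma normE (u : 'rV[C]_n) : ReR ((u *m u^t*) 0 0) = \sum_i Nc (u 0 i).
Proof.
rewrite mxE ReR_sum; apply: eq_bigr => i _; rewrite !mxE mulJ //.
Qed.

Lemma diagQ (y : 'rV[C]_n) (r : 'I_n -> R) :
  ReR ((y *m diag_mx (\row_j toC (r j)) *m y^t*) 0 0) = \sum_j r j * Nc (y 0 j).
Proof.
rewrite mul_mx_diag mxE ReR_sum; apply: eq_bigr => j _; rewrite !mxE.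
rewrite mulrAC mulJ -rmorphM /=; ring.
Qed.


Lemma char_poly_conj (K : comNzRingType) (Q D P : 'M[K]_n) :
  Q *m P = 1%:M -> char_poly (Q *m D *m P) = char_poly D.
Proof.
move=> QP; rewrite /char_poly /char_poly_mx.
have -> : 'X%:M - map_mx polyC (Q *m D *m P) =
    map_mx polyC Q *m ('X%:M - map_mx polyC D) *m map_mx polyC P.
  rewrite mulmxBr mulmxBl !map_mxM; congr (_ - _).
  by rewrite mul_mx_scalar -scalemxAl -map_mxM QP map_mx1 scalemx1.
by rewrite !det_mulmx mulrAC -det_mulmx -map_mxM QP map_mx1 det1 mul1r.
Qed.

Section Spec.
Variable L : 'M[R]_n.
Hypothesis Lsym : L^T = L.
Local Notation Lc := (map_mx toC L).

Lemma Lc_herm : Lc \is hermsymmx.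
Proof.
apply/is_hermitianmxP; rewrite expr0 scale1r; apply/matrixP => i j.
rewrite !mxE -[in LHS]Lsym mxE; exact: (esym (conjc_real _)).
Qed.

Let U := spectralmx Lc.
Let d := spectral_diag Lc.
Definition rr j := ReR (d 0 j).

Lemma Uunit : U \is unitarymx. Proof. exact: spectral_unitarymx. Qed.

Lemma UU : U *m U^t* = 1%:M. Proof. exact/unitarymxP/Uunit. Qed.
Lemma UtU : U^t* *m U = 1%:M.
Proof. by rewrite -invmx_unitary ?Uunit // mulVmx // spectral_unit. Qed.

Lemma dE : d = \row_j toC (rr j).
Proof.
apply/rowP => j; rewrite mxE /rr RRe_real //.
have := hermitian_spectral_diag_real Lc_herm.
by move/mxOverP => /(_ 0 j).
Qed.

Lemma Lc_dec : Lc = U^t* *m diag_mx (\row_j toC (rr j)) *m U.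
Proof.
rewrite -dE -invmx_unitary ?Uunit //.
exact/orthomx_spectralP/hermitian_normalmx/Lc_herm.
Qed.

Lemma rayleigh (u : 'rV[C]_n) :
  ReR ((u *m Lc *m u^t*) 0 0) = \sum_j rr j * Nc ((u *m U^t*) 0 j).
Proof.
rewrite -diagQ Lc_dec !mulmxA trmx_mul map_mxM trmxCK !mulmxA //.
Qed.

Lemma normU (u : 'rV[C]_n) :
  \sum_j Nc (u 0 j) = \sum_j Nc ((u *m U^t*) 0 j).
Proof.
rewrite -!normE trmx_mul map_mxM trmxCK mulmxA -(mulmxA u) UtU mulmx1 //.
Qed.

Lemma rr_rayleigh j : rr j = ReR ((row j U *m Lc *m (row j U)^t*) 0 0).
Proof.
rewrite rayleigh -row_mul UU (bigD1 j) //= big1 ?addr0.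
  by rewrite !mxE eqxx /Nc /=; ring.
move=> k kj; rewrite !mxE eq_sym (negbTE kj) /Nc /=; ring.
Qed.


Variable sL : seq R.
Hypothesis hchar : char_poly L = \prod_(x <- sL) ('X - x%:P).

Lemma perm_spec : perm_eq sL (map rr (index_enum 'I_n)).
Proof.
have h1 : char_poly Lc = \prod_(x <- map toC sL) ('X - x%:P).
  rewrite -map_char_poly hchar rmorph_prod big_map; apply: eq_bigr => x _.
  exact: map_polyXsubC.
have h2 : char_poly Lc =
    \prod_(x <- map (fun j => toC (rr j)) (index_enum 'I_n)) ('X - x%:P).
  rewrite Lc_dec char_poly_conj ?UtU // char_poly_trig ?diag_mx_is_trig //.
  by rewrite big_map; apply: eq_bigr => j _; rewrite !mxE eqxx mulr1n.
have := prod_XsubC_eq (etrans (esym h1) h2).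
move/(perm_map (@complex.Re R)).
have -> : map (@complex.Re R) (map toC sL) = sL by elim: sL => //= x s ->.
by rewrite -map_comp.
Qed.

End Spec.

End Cx.

Section Sorted.
Variable R : realDomainType.

Lemma path_le_last (a x : R) t : path <=%R a t -> x \in a :: t -> x <= last a t.
Proof.
elim: t a x => [|b t IH] a x /=; first by rewrite inE => _ /eqP ->.
move=> /andP [ab pt]; rewrite inE => /orP [/eqP ->|xin].
  by apply: le_trans ab _; apply: IH => //; rewrite mem_head.
exact: IH.
Qed.

Lemma sorted_le_last (s : seq R) (x : R) : sorted <=%R s -> x \in s -> x <= last 0 s.
Proof. by case: s => // a t /= pt; apply: path_le_last. Qed.

Lemma cnt_lt1 (s : seq R) : sorted <=%R s -> (1 < size s)%N ->
  (count (fun x : R => (x < s`_1)%R) s <= 1)%N.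
Proof.
case: s => [|a [|b t]] //= /andP [ab pt] _.
have := order_path_min le_trans pt => /allP allt.
rewrite ltxx add0n.
have -> : count (fun x => x < b) t = 0%N.
  apply/eqP; rewrite -leqn0 leqNgt -has_count; apply/hasPn => x /allt bx.
  by rewrite -leNgt.
by case: (a < b).
Qed.

Lemma cnt_le2 (s : seq R) : sorted <=%R s -> (1 < size s)%N ->
  (2 <= count (fun x : R => (x <= s`_1)%R) s)%N.
Proof.
case: s => [|a [|b t]] //= /andP [ab pt] _.
by rewrite ab lexx.
Qed.
End Sorted.

Section Main.
Variable R : rcfType.
Variable n : nat.
Variable G : 'M[R]_n.
Hypothesis n2 : (2 <= n)%N.
Hypothesis Gsym : G^T = G.
Hypothesis Gge0 : forall i j, 0 <= G i j.
Hypothesis Gdiag : forall i, G i i = 0.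
Hypothesis conn : wconnected G.
Variable sL : seq R.
Hypothesis hsort : sorted <=%R sL.
Hypothesis hchar : char_poly (laplacian G) = \prod_(x <- sL) ('X - x%:P).
Local Notation L := (laplacian G).
Local Notation toC := (real_complex R).
Local Notation Lc := (map_mx toC L).
Local Open Scope sesquilinear_scope.

Lemma Lsym : L^T = L.
Proof. by rewrite /laplacian linearB /= tr_diag_mx Gsym. Qed.

Local Notation r := (rr L).
Local Notation U := (spectralmx Lc).
Local Notation s1 := (sL`_1).
Local Notation rho := (last 0 sL).

Lemma perm_sL : perm_eq sL (map r (index_enum 'I_n)).
Proof. by move: (perm_spec Lsym hchar). Qed.

Lemma size_sL : size sL = n.
Proof.
rewrite (perm_size perm_sL) size_map [index_enum _]unlock -enumT.
by rewrite -cardT card_ord.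
Qed.

Lemma cnt_card (P : pred R) : count P sL = #|[pred j | P (r j)]|.
Proof.
rewrite (permP perm_sL) count_map -size_filter deprecated_filter_index_enum.
by rewrite cardE.
Qed.

Lemma rr_in j : r j \in sL.
Proof. by rewrite (perm_mem perm_sL) map_f // mem_index_enum. Qed.

Lemma rr_le_rho j : r j <= rho.
Proof. exact: sorted_le_last hsort (rr_in j). Qed.

Lemma ReC_map (w : 'rV[R]_n) : map_mx (@complex.Re R) (map_mx toC w) = w.
Proof. by apply/matrixP => i j; rewrite !mxE. Qed.
Lemma ImC_map (w : 'rV[R]_n) : map_mx (@complex.Im R) (map_mx toC w) = 0.
Proof. by apply/matrixP => i j; rewrite !mxE. Qed.

Lemma qf0 (M : 'M[R]_n) : qf M 0 = 0.
Proof. by rewrite /qf !mul0mx mxE. Qed.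

Lemma C1 (w : 'rV[R]_n) : qf L w <= rho * \sum_i w 0 i ^+ 2.
Proof.
set u := map_mx toC w.
have := ReQ L u; rewrite ReC_map ImC_map qf0 addr0 => <-.
rewrite (rayleigh Lsym) (_ : \sum_i w 0 i ^+ 2 = \sum_j Nc (u 0 j)); last first.
  by apply: eq_bigr => j _; rewrite /Nc !mxE /= expr0n addr0.
rewrite (normU L) mulr_sumr; apply: ler_sum => j _.
by rewrite ler_wpM2r ?Nc_ge0 ?rr_le_rho.
Qed.


Lemma rr_ReQ j : r j = qf L (map_mx (@complex.Re R) (row j U))
                      + qf L (map_mx (@complex.Im R) (row j U)).
Proof. by rewrite (rr_rayleigh Lsym j) ReQ. Qed.

Lemma rr_ge0 j : 0 <= r j.
Proof. by rewrite rr_ReQ addr_ge0 ?(qfL_ge0 Gsym _ Gge0). Qed.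

Lemma rowU_const j : r j = 0 -> forall l, U j l = U j j.
Proof.
rewrite rr_ReQ => h.
have ha := qfL_ge0 Gsym (map_mx (@complex.Re R) (row j U)) Gge0.
have hb := qfL_ge0 Gsym (map_mx (@complex.Im R) (row j U)) Gge0.
have ea : qf L (map_mx (@complex.Re R) (row j U)) = 0 by lra.
have eb : qf L (map_mx (@complex.Im R) (row j U)) = 0 by lra.
move=> l.
have := qfL_eq0_const Gsym Gge0 conn ea l j.
have := qfL_eq0_const Gsym Gge0 conn eb l j.
rewrite !mxE => e2 e1.
by apply/eqP; rewrite eq_complex e1 e2 !eqxx.
Qed.

Lemma UUE j k : (U *m U^t*) j k = \sum_l U j l * (U k l)^*.
Proof. by rewrite mxE; apply: eq_bigr => l _; rewrite !mxE. Qed.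

Lemma s1_gt0 : 0 < s1.
Proof.
have := cnt_le2 hsort; rewrite size_sL => /(_ n2).
rewrite cnt_card => /card_gt1P [j [k [hj hk jk]]].
rewrite ltNge; apply/negP => s10.
rewrite !inE in hj hk.
have rj0 : r j = 0 by apply/le_anti; rewrite rr_ge0 (le_trans hj s10).
have rk0 : r k = 0 by apply/le_anti; rewrite rr_ge0 (le_trans hk s10).
have cj := rowU_const rj0; have ck := rowU_const rk0.
have n0 : (n%:R : R[i]) != 0 by rewrite pnatr_eq0 -lt0n (leq_trans _ n2).
have ejj : (U *m U^t*) j j = n%:R * (U j j * (U j j)^*).
  rewrite UUE (eq_bigr (fun _ => U j j * (U j j)^*)) => [|l _]; last by rewrite cj.
  by rewrite sumr_const card_ord mulr_natl.
have ejk : (U *m U^t*) j k = n%:R * (U j j * (U k k)^*).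
  rewrite UUE (eq_bigr (fun _ => U j j * (U k k)^*)) => [|l _]; last by rewrite cj ck.
  by rewrite sumr_const card_ord mulr_natl.
have ekk : (U *m U^t*) k k = n%:R * (U k k * (U k k)^*).
  rewrite UUE (eq_bigr (fun _ => U k k * (U k k)^*)) => [|l _]; last by rewrite ck.
  by rewrite sumr_const card_ord mulr_natl.
move: ejj ejk ekk; rewrite (UU L) !mxE !eqxx (negbTE jk) !mulr1n => ejj ejk ekk.
have : n%:R * (U j j * (U k k)^*) != 0.
  rewrite mulf_neq0 // mulf_neq0 //.
    by apply/negP => /eqP e; move: ejj; rewrite e mul0r mulr0 => /eqP; rewrite oner_eq0.
  by rewrite conjC_eq0; apply/negP => /eqP e; move: ekk; rewrite e mul0r mulr0 => /eqP; rewrite oner_eq0.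
by rewrite -ejk eqxx.
Qed.


Lemma ReRB (x y : R[i]) : ReR (x - y) = ReR x - ReR y. Proof. by case: x; case: y. Qed.
Lemma ImRB (x y : R[i]) : ImR (x - y) = ImR x - ImR y. Proof. by case: x; case: y. Qed.

Lemma exk : exists k, forall j, j != k -> s1 <= r j.
Proof.
have := cnt_lt1 hsort; rewrite size_sL => /(_ n2); rewrite cnt_card => hc.
case: (pickP [pred j | r j < s1]) => [k hk | none].
  exists k => j jk; rewrite leNgt; apply/negP => hj.
  have : (1 < #|[pred j | (r j < s1)%R]|)%N.
    by apply/card_gt1P; exists j, k; rewrite !inE hj jk; split...
  by rewrite ltnNge hc.
have n0 : (0 < n)%N by apply: leq_trans n2.
by exists (Ordinal n0) => j _; rewrite leNgt; have := none j => /= ->.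
Qed.

Lemma key k (hk : forall j, j != k -> s1 <= r j) (u : 'rV[R[i]]_n) :
  (u *m U^t*) 0 k = 0 -> s1 * \sum_j Nc (u 0 j) <= ReR ((u *m Lc *m u^t*) 0 0).
Proof.
move=> yk; rewrite (rayleigh Lsym) (normU L) mulr_sumr; apply: ler_sum => j _.
case: (eqVneq j k) => [->|jk].
  by rewrite yk /Nc /= expr0n /= addr0 !mulr0.
by rewrite ler_wpM2r ?Nc_ge0 ?hk.
Qed.

Lemma Nc_split (u : 'rV[R[i]]_n) : \sum_j Nc (u 0 j) =
  \sum_j (map_mx (@complex.Re R) u) 0 j ^+ 2 + \sum_j (map_mx (@complex.Im R) u) 0 j ^+ 2.
Proof. by rewrite -big_split; apply: eq_bigr => j _; rewrite !mxE. Qed.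

Lemma fied_gen i k (hk : forall j, j != k -> s1 <= r j) (a b : R[i]) :
  a * ((const_mx 1 : 'rV[R[i]]_n) *m U^t*) 0 k - b * ((\row_j ((j == i)%:R : R[i])) *m U^t*) 0 k = 0 ->
  s1 * (n%:R * ReR a ^+ 2 + 2 * ReR a * (- ReR b) + (- ReR b) ^+ 2 +
        (n%:R * ImR a ^+ 2 + 2 * ImR a * (- ImR b) + (- ImR b) ^+ 2))
  <= ((- ReR b) ^+ 2 + (- ImR b) ^+ 2) * eta G i.
Proof.
move=> h.
set u := a *: (const_mx 1 : 'rV[R[i]]_n) - b *: \row_j ((j == i)%:R : R[i]).
have yk : (u *m U^t*) 0 k = 0.
  by rewrite /u mulmxBl -!scalemxAl !mxE in h *.
have := key hk yk; rewrite ReQ Nc_split.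
have -> : map_mx (@complex.Re R) u = \row_j (ReR a + (- ReR b) * (j == i)%:R).
  apply/matrixP => z j; rewrite !mxE mulr1.
  by case: (j == i); rewrite ?mulr1 ?mulr0 ?subr0 ?addr0 ?ReRB ?ImRB.
have -> : map_mx (@complex.Im R) u = \row_j (ImR a + (- ImR b) * (j == i)%:R).
  apply/matrixP => z j; rewrite !mxE mulr1.
  by case: (j == i); rewrite ?mulr1 ?mulr0 ?subr0 ?addr0 ?ReRB ?ImRB.
by rewrite !(qfL_row Gsym) !(qfL_dlt Gdiag) !sum_row_sq => H; rewrite [_ * eta G i]mulrDl.
Qed.


Lemma Nc_gt0 (z : R[i]) : z != 0 -> 0 < Nc z.
Proof.
move=> nz; rewrite lt_def Nc_ge0 andbT; apply: contra nz => /eqP.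
case: z => x y; rewrite /Nc /= => h.
have hx : x ^+ 2 = 0 by have := sqr_ge0 x; have := sqr_ge0 y; lra.
have hy : y ^+ 2 = 0 by have := sqr_ge0 x; have := sqr_ge0 y; lra.
move/eqP: hx; rewrite sqrf_eq0 => /eqP ->; move/eqP: hy; rewrite sqrf_eq0 => /eqP ->.
by [].
Qed.

Lemma eta_ge0 i : 0 <= eta G i.
Proof. by apply: sumr_ge0 => j _; exact: Gge0. Qed.

Lemma fiedler i : s1 * (n%:R - 1) <= n%:R * eta G i.
Proof.
have [k hk] := exk.
set c1 := ((const_mx 1 : 'rV[R[i]]_n) *m U^t*) 0 k.
set c2 := ((\row_j ((j == i)%:R : R[i])) *m U^t*) 0 k.
have s1p := s1_gt0.
have m2 : (2 : R) <= n%:R by rewrite ler_nat.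
have eta0 := eta_ge0 i.
case: (eqVneq c1 0) => c10.
  have := @fied_gen i k hk 1 0; rewrite -/c1 -/c2 c10 mul1r mul0r subr0 => /(_ erefl).
  rewrite /= => H; exfalso; nra.
have := @fied_gen i k hk c2 c1; rewrite -/c1 -/c2 mulrC subrr => /(_ erefl).
have Bp : 0 < Nc c1 by exact: Nc_gt0.
move: Bp; rewrite /Nc.
set pa := ReR c2; set pb := ImR c2; set qa := - ReR c1; set qb := - ImR c1.
have -> : ReR c1 ^+ 2 + ImR c1 ^+ 2 = qa ^+ 2 + qb ^+ 2 by rewrite /qa /qb !sqrrN.
set B := qa ^+ 2 + qb ^+ 2; set m := (n%:R : R) => Bp H.
set P := (m * pa ^+ 2 + 2 * pa * qa + qa ^+ 2 + (m * pb ^+ 2 + 2 * pb * qb + qb ^+ 2)) in H.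
have eP : m * P = (m * pa + qa) ^+ 2 + (m * pb + qb) ^+ 2 + (m - 1) * B.
  by rewrite /P /B; ring.
have H2 : s1 * ((m - 1) * B) <= m * (B * eta G i).
  apply: (@le_trans _ _ (m * (s1 * P))).
    rewrite [X in _ <= X]mulrCA eP ler_wpM2l ?(ltW s1p) //.
    by rewrite lerDr addr_ge0 ?sqr_ge0.
  by rewrite ler_wpM2l ?ler0n.
rewrite -(ler_pM2r Bp) -mulrA (_ : m * eta G i * B = m * (B * eta G i)) //; ring.
Qed.


Lemma bigmax_ge (F : 'I_n -> R) (rs : seq 'I_n) i :
  i \in rs -> F i <= \big[Num.max/0]_(j <- rs) F j.
Proof.
elim: rs => // a rs IH; rewrite inE big_cons => /orP [/eqP ->|ir].
  by rewrite le_max lexx.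
by rewrite le_max IH ?orbT.
Qed.

Lemma degvec_ord0 i : degvec G i ord0 = eta G i.
Proof. by rewrite /degvec mxE; apply: eq_bigr => j _; rewrite mxE mulr1. Qed.

Lemma main_bound (lambda mu theta : R) : 0 < lambda -> 0 < mu ->
  eigenvalue (invmx (diag_mx (\row_i (lambda%:M + mu *: L) i i)) *m
              (lambda%:M + mu *: L)) theta ->
  lambda / (lambda + mu * \big[Num.max/0]_(i < n) degvec G i ord0) <= theta /\
  theta <= Num.min 2 (n%:R / (n.-1)%:R * (last 0 sL / sL`_1)).
Proof.
move=> lp mp /eigenvalueP [v hv v0].
set A := lambda%:M + mu *: L.
have Aii i : A i i = lambda + mu * eta G i.
  rewrite [A i i]mxE [(lambda%:M) i i]mxE [(mu *: L) i i]mxE lapE eqxx Gdiag subr0 mul1r mulr1n //.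
set pd := \row_i A i i.
have pdpos i : 0 < pd 0 i.
  by rewrite mxE Aii ltr_wpDr // mulr_ge0 ?(ltW mp) ?eta_ge0.
have Pu : diag_mx pd \in unitmx.
  rewrite unitmxE det_diag unitfE; apply/prodf_neq0 => i _.
  by rewrite gt_eqF.
set w := v *m invmx (diag_mx pd).
have hw : w *m A = theta *: (w *m diag_mx pd).
  by rewrite /w mulmxKV // -mulmxA.
have w0 : w != 0.
  by apply: contra v0 => /eqP w0; rewrite -(mulmxKV Pu v) -/w w0 mul0mx.
have qfA : qf A w = theta * qf (diag_mx pd) w.
  by rewrite /qf hw -scalemxAl mxE.
set N := \sum_i w 0 i ^+ 2.
set E := \sum_i eta G i * w 0 i ^+ 2.
have eA : qf A w = lambda * N + mu * qf L w.
  rewrite /qf /A mulmxDr mul_mx_scalar -scalemxAr !mulmxDl -!scalemxAl !mxE.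
  congr (_ * _ + _); apply: eq_bigr => j _; by rewrite !mxE expr2.
have eP : qf (diag_mx pd) w = lambda * N + mu * E.
  rewrite /qf mul_mx_diag mxE /N /E !mulr_sumr -big_split; apply: eq_bigr => i _.
  rewrite mxE [w^T _ _]mxE [pd 0 i]mxE Aii /=; ring.
have [j wj] : exists j, w 0 j != 0.
  case: (boolP [exists j, w 0 j != 0]) => [/existsP //|]. move=> /existsPn h.
  suff wz : w = 0 by rewrite wz eqxx in w0.
  by apply/rowP => k; have := h k; rewrite negbK => /eqP ->; rewrite mxE.
have Np : 0 < N.
  rewrite /N (bigD1 j) //= ltr_wpDr ?sumr_ge0 // => [i _|]; first exact: sqr_ge0.
  by rewrite lt_def sqr_ge0 andbT sqrf_eq0 wj.
have QL0 := qfL_ge0 Gsym w Gge0.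
have QL2 := qfL_le2 Gsym w Gge0; rewrite -/E in QL2.
have QLr := C1 w; rewrite -/N in QLr.
set M := \big[Num.max/0]_(i < n) degvec G i ord0.
have etaM i : eta G i <= M.
  by rewrite -degvec_ord0; apply: bigmax_ge; exact: mem_index_enum.
have EM : E <= M * N.
  rewrite /E /N mulr_sumr; apply: ler_sum => i _.
  by rewrite ler_wpM2r ?sqr_ge0 ?etaM.
have E0 : 0 <= E by apply: sumr_ge0 => i _; rewrite mulr_ge0 ?eta_ge0 ?sqr_ge0.
have M0 : 0 <= M := le_trans (eta_ge0 j) (etaM j).
have fE : s1 * (n%:R - 1) * N <= n%:R * E.
  rewrite /E /N !mulr_sumr; apply: ler_sum => i _.
  by rewrite mulrA ler_wpM2r ?sqr_ge0 ?fiedler.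
have s1rho : s1 <= rho.
  by apply: sorted_le_last hsort _; apply: mem_nth; rewrite size_sL.
have s1p := s1_gt0.
have hq : theta * (lambda * N + mu * E) = lambda * N + mu * qf L w.
  by rewrite -eP -eA qfA.
have Dp : 0 < lambda * N + mu * E.
  by rewrite ltr_wpDr ?mulr_gt0 // mulr_ge0 ?(ltW mp).
have thp : 0 < theta.
  have : 0 < theta * (lambda * N + mu * E).
    by rewrite hq ltr_wpDr ?mulr_gt0 // mulr_ge0 ?(ltW mp).
  by rewrite pmulr_lgt0.
have -> : (n.-1)%:R = n%:R - 1 :> R.
  by rewrite -subn1 natrB // (leq_trans _ n2).
set m := (n%:R : R).
have m2 : 2 <= m by rewrite /m ler_nat.
split.
  rewrite ler_pdivrMr; last by rewrite ltr_wpDr // mulr_ge0 ?(ltW mp).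
  rewrite -(ler_pM2r Np).
  have h1 : 0 <= theta * mu * (M * N - E).
    by rewrite !mulr_ge0 ?(ltW mp) ?(ltW thp) // subr_ge0.
  have h2 : 0 <= mu * qf L w by rewrite mulr_ge0 ?(ltW mp).
  lra.
rewrite le_min; apply/andP; split.
  rewrite -(ler_pM2r Dp) hq.
  have h2 : mu * qf L w <= mu * (2 * E) by rewrite ler_wpM2l ?(ltW mp).
  have h3 : 0 < lambda * N by rewrite mulr_gt0.
  lra.
have cp : 0 < (m - 1) * s1 by rewrite mulr_gt0 // subr_gt0 (lt_le_trans _ m2) ?ltr1n.
have m1 : m - 1 != 0 by rewrite subr_eq0 (gt_eqF (lt_le_trans _ m2)) ?ltr1n.
rewrite -(ler_pM2r Dp) hq.
rewrite (_ : m / (m - 1) * (rho / s1) * (lambda * N + mu * E) =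
   (m * rho * (lambda * N + mu * E)) / ((m - 1) * s1)); last by field; rewrite m1 gt_eqF.
rewrite ler_pdivlMr //.
have rp : 0 < rho := lt_le_trans s1p s1rho.
have h1 : (m - 1) * s1 * (lambda * N) <= m * rho * (lambda * N).
  rewrite ler_wpM2r ?mulr_ge0 ?(ltW lp) ?(ltW Np) //.
  apply: (@le_trans _ _ (m * s1)); first by rewrite ler_wpM2r ?(ltW s1p) // lerBlDr lerDl.
  by rewrite ler_wpM2l // (le_trans _ m2).
have h2 : (m - 1) * s1 * mu * qf L w <= (m - 1) * s1 * mu * (rho * N).
  by rewrite ler_wpM2l // mulr_ge0 ?(ltW cp) ?(ltW mp).
have h3 : rho * mu * (s1 * (m - 1) * N) <= rho * mu * (m * E).
  by rewrite ler_wpM2l // mulr_ge0 ?(ltW rp) ?(ltW mp).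
lra.
Qed.



End Main.

Theorem lemma4p6 (R : rcfType) (n : nat) (Gamma : 'M[R]_n)
  (lambda mu : R) (sL : seq R) (theta : R) :
  (2 <= n)%N ->
  Gamma^T = Gamma ->
  (forall i j, 0 <= Gamma i j <= 1) ->
  (forall i, Gamma i i = 0) ->
  (forall i, exists j, j != i /\ 0 < Gamma i j) ->
  wconnected Gamma ->
  0 < lambda -> 0 < mu ->
  (* sL = eigenvalues of L in nondecreasing order, with multiplicity *)
  is_sorted_spectrum (laplacian Gamma) sL ->
  let eta := degvec Gamma in
  let L := laplacian Gamma in
  let A := lambda%:M + mu *: L in
  let Pa := diag_mx (\row_i A i i) in
  let rhoL := last 0 sL in          (* spectral radius = largest eigenvalue *)
  let aL := sL`_1 in                 (* algebraic connectivity *)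
  let maxeta := \big[Num.max/0]_(i < n) eta i ord0 in
  eigenvalue (invmx Pa *m A) theta ->
  lambda / (lambda + mu * maxeta) <= theta /\
  theta <= Num.min 2 (n%:R / (n.-1)%:R * (rhoL / aL)).
Proof.
move=> n2 Gs G01 Gd Grow conn lp mp [hs hc].
have Gge0 : forall i j, 0 <= Gamma i j by move=> i j; case/andP: (G01 i j).
exact: (main_bound n2 Gs Gge0 Gd conn hs hc lp mp).
Qed.
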